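(* Let $X=V(f)\subset\mathbb{P}^n$, $f=\sum_{u\in\mathcal{A}}c_ux^u$, be an irreducible hypersurface, not a cone, with $\operatorname{trop}(X)$ smooth. Let $P$ be a cell of $\operatorname{trop}(X)$, let $\widehat P$ be the corresponding cell of $\operatorname{trop}(\widehat X)$, and let $\mathcal{A}_0=\mathcal{A}(p)$ for $p$ in the relative interior of $\widehat P$. Let $u\in\mathcal{A}\setminus\mathcal{A}_0$ be such that $\{u\}\cup\mathcal{A}_0$ spans a simplex of the triangulation, and let $Q$ be the corresponding facet of $P$, namely the intersection of the affine span of $P$ with the image in $\mathbb{R}^{n+1}/\mathbb{R}(1,\dots,1)$ of $\{q\in\mathbb{R}^{n+1}:\nu(c_u)-\langle q,u\rangle=\nu(c_v)-\langle q,v\rangle\}$ for $v\in\mathcal{A}_0$. Then for any $v\in\mathcal{A}_0$ and any $q$ in the affine span of $\widehat P$, $$\delta_Q(q)=\phi_q(u)-\phi_q(v),$$ where $\phi_q(w)=\nu(c_w)-\langle q,w\rangle$ and $\delta_Q(q)$ denotes the lattice distance from (the image of) $q$ to $Q$.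
   Context: $\mathbb{K}$ algebraically closed of characteristic zero with nontrivial non-Archimedean valuation $\nu$ trivial on integers. $\mathcal{A}\subset\mathbb{Z}^{n+1}$, $c_u\neq0$, $f$ homogeneous involving all variables. For $q\in\mathbb{R}^{n+1}$, $\mathcal{A}(q)$ is the set of $w\in\mathcal{A}$ minimizing $\nu(c_w)-\langle q,w\rangle$; $\operatorname{trop}(\widehat X)=\{q:\#\mathcal{A}(q)>1\}$, with cells determined by the value of $\mathcal{A}(q)$ (dual to the regular subdivision of $\operatorname{conv}\mathcal{A}$ given by the sets $\operatorname{conv}\mathcal{A}(q)$); $\operatorname{trop}(X)$ is its image in $\mathbb{R}^{n+1}/\mathbb{R}(1,\dots,1)\cong\mathbb{R}^n$ with the induced cells. Smooth: the subdivision is a unimodular triangulation. Lattice distance: for a rational polyhedron $P$ with facet $Q$, $v_Q$ is the primitive inward normal (primitive integral functional on the direction lattice of the affine span of $P$, vanishing on the directions of $Q$, positive towards $P$), and $\delta_Q(q)=\langle q-q',v_Q\rangle$ for any $q'\in Q$; it extends to the affine span of $P$. *)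

(* Defs.v *)
From HB Require Import structures.
From mathcomp Require Import all_boot all_order all_algebra.
From mathcomp Require Import mpoly.
Set Implicit Arguments. Unset Strict Implicit. Unset Printing Implicit Defensive.
Import Order.TTheory GRing.Theory Num.Theory.
Local Open Scope ring_scope.

Section Valuation.
Variables (K : fieldType) (R : realFieldType).

(* A (real-valued, non-Archimedean) valuation on K^*; the value nu 0 is
   irrelevant and never used. *)
Definition is_nonarch_valuation (nu : K -> R) : Prop :=
  (forall x y : K, x != 0 -> y != 0 -> nu (x * y) = nu x + nu y) /\
  (forall x y : K, x != 0 -> y != 0 -> x + y != 0 ->
      Num.min (nu x) (nu y) <= nu (x + y)).

Definition valuation_nontrivial (nu : K -> R) : Prop :=
  exists x : K, x != 0 /\ nu x != 0.

Definition valuation_trivial_on_integers (nu : K -> R) : Prop :=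
  forall k : nat, (0 < k)%N -> nu (k%:R) = 0.
End Valuation.

Section PolyHyps.
Variables (K : fieldType) (N : nat).

Definition mconstant (g : {mpoly K[N]}) : Prop := g = (g@_0%MM)%:MP.

Definition mirreducible (f : {mpoly K[N]}) : Prop :=
  ~ mconstant f /\
  forall g h : {mpoly K[N]}, f = g * h -> mconstant g \/ mconstant h.

Definition mhomogeneous (f : {mpoly K[N]}) : Prop :=
  exists d : nat, forall m, m \in msupp f -> mdeg m = d.

Definition involves_all_variables (f : {mpoly K[N]}) : Prop :=
  forall i : 'I_N, exists m, m \in msupp f /\ (0 < m i)%N.

(* V(f) in P^(N-1) is a cone: there is a vertex [p] such that the affine cone
   of V(f) is stable under translation along the line spanned by p. *)
Definition hypersurface_is_cone (f : {mpoly K[N]}) : Prop :=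
  exists p : 'I_N -> K, (exists i, p i != 0) /\
    forall (x : 'I_N -> K) (t : K),
      f.@[x] = 0 -> f.@[fun i => x i + t * p i] = 0.
End PolyHyps.

Section Trop.
Variables (K : fieldType) (R : realFieldType) (N : nat).
Variables (nu : K -> R) (f : {mpoly K[N]}).

Definition vec := 'I_N -> R.

Definition pairing (q : vec) (w : 'X_{1..N}) : R := \sum_i q i * (w i)%:R.

Definition phi (q : vec) (w : 'X_{1..N}) : R := nu (f@_w) - pairing q w.

Definition Amin (q : vec) : seq 'X_{1..N} :=
  [seq w <- msupp f | all (fun w' => phi q w <= phi q w') (msupp f)].

Definition in_trop_hat (q : vec) : Prop := (1 < size (Amin q))%N.

(* the closed cell of trop(\hat X) whose relative interior is {A(q) = A0} *)
Definition cell_hat (A0 : seq 'X_{1..N}) (q : vec) : Prop :=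
  {subset A0 <= Amin q}.

Definition intvec (z : 'I_N -> int) : vec := fun i => (z i)%:~R.

(* the vectors of vs are linearly independent and span a saturated
   sublattice of Z^N, i.e. they extend to a Z-basis of the lattice
   {x in Z^N | sum x = 0} *)
Definition unimodular_family (vs : seq ('I_N -> int)) : Prop :=
  (forall a : 'I_(size vs) -> R,
     (forall i, \sum_j a j * ((nth (fun=> 0) vs j) i)%:~R = 0) ->
     forall j, a j = 0) /\
  (forall (x : 'I_N -> int) (a : 'I_(size vs) -> R),
     (forall i, (x i)%:~R = \sum_j a j * ((nth (fun=> 0) vs j) i)%:~R) ->
     exists b : 'I_(size vs) -> int,
       forall i, x i = \sum_j b j * (nth (fun=> 0) vs j) i).

Definition diff_exps (w0 w : 'X_{1..N}) : 'I_N -> int :=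
  fun i => (w i)%:Z - (w0 i)%:Z.

(* every cell conv A(q) of the regular subdivision is a unimodular simplex
   with vertex set A(q) *)
Definition trop_smooth : Prop :=
  forall q : vec, match Amin q with
                  | [::] => True
                  | w0 :: rest => unimodular_family [seq diff_exps w0 w | w <- rest]
                  end.

Definition aff_hull (S : vec -> Prop) (q : vec) : Prop :=
  exists (k : nat) (pts : 'I_k -> vec) (lam : 'I_k -> R),
    (forall j, S (pts j)) /\ \sum_j lam j = 1 /\
    forall i, q i = \sum_j lam j * pts j i.

Definition aff_dir (S : vec -> Prop) (x : vec) : Prop :=
  exists a b, aff_hull S a /\ aff_hull S b /\ forall i, x i = a i - b i.

Definition dot (y x : vec) : R := \sum_i y i * x i.

(* y (restricted to the direction space of aff(Phat)) represents the
   primitive inward normal v_Q of the facet Q of P in R^N / R(1,...,1):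
   it descends to the quotient, is integral and primitive on the direction
   lattice, vanishes on the directions of Q and is nonnegative towards P. *)
Definition primitive_inward_normal (Phat Qhat : vec -> Prop) (y : vec) : Prop :=
  dot y (fun=> 1) = 0 /\
  (forall z : 'I_N -> int, aff_dir Phat (intvec z) ->
      exists k : int, dot y (intvec z) = k%:~R) /\
  (exists z : 'I_N -> int, aff_dir Phat (intvec z) /\ dot y (intvec z) = 1) /\
  (forall a b, Qhat a -> Qhat b -> dot y (fun i => a i - b i) = 0) /\
  (forall a b, Phat a -> Qhat b -> 0 <= dot y (fun i => a i - b i)).

(* the (lift to R^N of the affine span of the) facet Q of P determined by u *)
Definition facet_hat (A0 : seq 'X_{1..N}) (u : 'X_{1..N}) (q : vec) : Prop :=
  aff_hull (cell_hat A0) q /\ forall v, v \in A0 -> phi q u = phi q v.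

End Trop.

(* Main.v *)
Require Import Defs.
From HB Require Import structures.
From mathcomp Require Import all_boot all_order all_algebra.
From mathcomp Require Import mpoly zify ring lra.
Import Order.TTheory GRing.Theory Num.Theory.
Set Implicit Arguments. Unset Strict Implicit. Unset Printing Implicit Defensive.
Local Open Scope ring_scope.

Lemma int_sq1 (x y : int) : x * y = 1 -> x * x = 1.
Proof. rewrite mulrC => /intUnitRing.unitzPl. rewrite qualifE /= => /orP[/eqP->|/eqP->] //. Qed.

Lemma snf_solve (R : numFieldType) k N (M : 'M[int]_(k,N)) :
  (forall a : 'rV[R]_k, a *m map_mx intr M = 0 -> a = 0) ->
  (forall (x : 'rV[int]_N) (a : 'rV[R]_k), map_mx intr x = a *m map_mx intr M ->
       exists b : 'rV[int]_k, x = b *m M) ->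
  exists Z : 'M[int]_(N,k), M *m Z = 1%:M.
Proof.
move=> Hind Hsat.
have [L Lu [Rm Ru [d _ eM]]] := int_Smith_normal_form M.
set D := \matrix_(i, j) _ in eM.
have LiL : invmx L *m L = 1%:M by apply: mulVmx.
have RRi : Rm *m invmx Rm = 1%:M by apply: mulmxV.
have LiM : invmx L *m M = D *m Rm by rewrite eM !mulmxA LiL mul1mx.
have key : forall i : 'I_k, (exists j : 'I_N, val j = val i) /\ d`_i * d`_i = 1.
  move=> i.
  have [j Dij] : exists j, D i j != 0.
    apply/existsP; apply: contraT; rewrite negb_exists => /forallP Hz.
    have r0 : row i D = 0 by apply/rowP => j; rewrite !mxE; apply/eqP; have := Hz j; rewrite negbK mxE.
    have : map_mx (intr : int -> R) (row i (invmx L)) *m map_mx (intr : int -> R) M = 0.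
      by rewrite -map_mxM -row_mul LiM row_mul r0 mul0mx map_mx0.
    move/Hind => h0.
    have h1 : row i (invmx L) = 0.
      apply/rowP => l; move/matrixP: h0 => /(_ 0 l); rewrite !mxE => /eqP.
      by rewrite intr_eq0 => /eqP.
    have := congr1 (fun A => A *m L) h1; rewrite -row_mul LiL mul0mx.
    move/matrixP => /(_ 0 i); rewrite !mxE eqxx /= => /eqP; by rewrite oner_eq0.
  move: Dij; rewrite mxE; case Eij: (i == j :> nat); rewrite ?mulr0n ?eqxx // mulr1n => di0; move/eqP: Eij => ij.
  split; first by exists j.
  have hx : map_mx (intr : int -> R) (row j Rm) =
            ((d`_i)%:~R^-1 *: map_mx (intr : int -> R) (row i (invmx L))) *m map_mx (intr : int -> R) M.
    rewrite -scalemxAl -map_mxM -row_mul LiM row_mul.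
    have -> : row i D = d`_i *: delta_mx 0 j.
      apply/rowP => l; rewrite !mxE; case: (l =P j) => [->|lj].
        by rewrite eqxx ij eqxx mulr1n mulr1.
      rewrite mulr0; case: eqP => // il; case: lj; apply: val_inj; by rewrite /= -il ij.
    rewrite -scalemxAl -rowE map_mxZ scalerA mulVf ?scale1r //.
    by rewrite intr_eq0.
  have [b hb] := Hsat _ _ hx.
  have := congr1 (fun A => A *m invmx Rm) hb.
  rewrite -row_mul RRi eM !mulmxA -(mulmxA _ Rm) RRi mulmx1.
  move/matrixP => /(_ 0 j); rewrite !mxE eqxx /=.
  rewrite (bigD1 i) //= big1 ?addr0.
    have ijb : (i == j :> nat) by apply/eqP.
    rewrite [D i j]mxE ijb mulr1n => /esym; rewrite mulrC; exact: int_sq1.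
  move=> l li; rewrite [D l j]mxE; case: eqP; rewrite ?mulr0n ?mulr0 // => lj.
  by case/eqP: li; apply: val_inj; rewrite /= lj -ij.
exists (invmx Rm *m D^T *m invmx L).
rewrite eM !mulmxA -(mulmxA _ Rm) RRi mulmx1 -(mulmxA L D).
have -> : D *m D^T = 1%:M.
  apply/matrixP => a b; rewrite !mxE.
  have [[ja hja] da] := key a.
  rewrite (bigD1 ja) //= big1 ?addr0.
    rewrite !mxE hja eqxx mulr1n.
    case: (a =P b) => [<-|ab]; first by rewrite eqxx mulr1n da.
    have -> : (b == a :> nat) = false by apply/eqP => e; apply: ab; apply: val_inj; rewrite /= e.
    by rewrite mulr0n mulr0.
  move=> j jn; rewrite !mxE.
  have -> : (a == j :> nat) = false by apply/eqP => e; case/eqP: jn; apply: val_inj; rewrite /= hja -e.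
  by rewrite mulr0n mul0r.
by rewrite mulmx1 mulmxV.
Qed.

Lemma unimod_solve (R : realFieldType) N (vs : seq ('I_N -> int)) :
  unimodular_family R vs -> forall e : 'I_(size vs) -> int,
  exists z : 'I_N -> int, forall j : 'I_(size vs),
    \sum_i nth (fun=> 0) vs j i * z i = e j.
Proof.
move=> [H1 H2] e.
pose M : 'M[int]_(size vs, N) := \matrix_(j, i) nth (fun=> 0) vs j i.
have [Z hZ] : exists Z : 'M[int]_(N, size vs), M *m Z = 1%:M.
  apply: (snf_solve (R:=R)).
    move=> a ha; apply/rowP => j; rewrite mxE; apply: (H1 (fun j => a 0 j)) => i.
    move/matrixP: ha => /(_ 0 i); rewrite !mxE => h; rewrite -[X in _ = X]h; apply: eq_bigr => l _.
    by rewrite !mxE.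
  move=> x a hx.
  have hx' : forall i, (x 0 i)%:~R = \sum_j a 0 j * ((nth (fun=> 0) vs j) i)%:~R.
    move=> i; move/matrixP: hx => /(_ 0 i); rewrite !mxE => ->; apply: eq_bigr => l _.
    by rewrite !mxE.
  have [b hb] := H2 (fun i => x 0 i) (fun j => a 0 j) hx'.
  exists (\row_j b j); apply/rowP => i; rewrite !mxE hb; apply: eq_bigr => l _.
  by rewrite !mxE.
exists (fun i => (Z *m \col_j e j) i 0) => j.
have := congr1 (fun A : 'M[int]_(size vs, 1) => A j 0) (esym (mulmxA M Z (\col_j e j))).
rewrite hZ mul1mx !mxE => ->; apply: eq_bigr => l _; by rewrite !mxE.
Qed.

Lemma exists_t (R : realFieldType) (T : eqType) (s : seq T) (a b : T -> R) :
  (forall w, w \in s -> 0 < a w \/ (b w <= 0 /\ 0 <= a w)) ->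
  exists t, 0 < t /\ forall w, w \in s -> t * b w <= a w.
Proof.
move=> H.
suff [t [t0 Ht]] : exists t, 0 < t /\ forall w, w \in s -> 0 < a w -> t * (`|b w| + 1) <= a w.
  exists t; split => // w ws; case: (H w ws) => [aw|[bw aw]].
    have := Ht w ws aw; have := ler_norm (b w); nra.
  nra.
elim: s {H} => [|w s [t' [t'0 IH]]]; first by exists 1; split => //.
have nb : 0 < `|b w| + 1 by have := normr_ge0 (b w); lra.
case: (ltrP 0 (a w)) => aw.
  exists (Num.min t' (a w / (`|b w| + 1))).
  have tl : Num.min t' (a w / (`|b w| + 1)) <= t' by rewrite ge_min lexx.
  have tr : Num.min t' (a w / (`|b w| + 1)) <= a w / (`|b w| + 1) by rewrite ge_min lexx orbT.
  split; first by rewrite lt_min t'0 /= divr_gt0.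
  move=> x; rewrite inE => /orP[/eqP->|xs] ax.
    apply: le_trans (ler_wpM2r (ltW nb) tr) _; rewrite divfK //; exact: lt0r_neq0.
  apply: le_trans (IH x xs ax); apply: ler_wpM2r tl; have := normr_ge0 (b x); lra.
exists t'; split => // x; rewrite inE => /orP[/eqP->|xs] ax; last exact: IH.
by move: aw; rewrite leNgt ax.
Qed.

Section Geo.
Variables (K : fieldType) (R : realFieldType) (N : nat) (nu : K -> R) (f : {mpoly K[N]}).

Lemma pairing_lin (a b : vec R N) t w :
  pairing (fun i => a i + t * b i) w = pairing a w + t * pairing b w.
Proof. rewrite /pairing mulr_sumr -big_split /=; apply: eq_bigr => i _; by rewrite mulrDl mulrA. Qed.

Lemma pairing_sub (a b : vec R N) w :
  pairing (fun i => a i - b i) w = pairing a w - pairing b w.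
Proof. rewrite /pairing -sumrB; apply: eq_bigr => i _; by rewrite mulrBl. Qed.

Lemma pairing_ext (a b : vec R N) w : (forall i, a i = b i) -> pairing a w = pairing b w.
Proof. move=> h; rewrite /pairing; apply: eq_bigr => i _; by rewrite h. Qed.

Lemma dot_lin (y a b : vec R N) t :
  dot y (fun i => a i + t * b i) = dot y a + t * dot y b.
Proof. rewrite /dot mulr_sumr -big_split /=; apply: eq_bigr => i _; rewrite mulrDr; congr (_ + _); ring. Qed.

Lemma dot_ext (y a b : vec R N) : (forall i, a i = b i) -> dot y a = dot y b.
Proof. move=> h; rewrite /dot; apply: eq_bigr => i _; by rewrite h. Qed.

Lemma phi_lin (a b : vec R N) t w :
  phi nu f (fun i => a i + t * b i) w = phi nu f a w - t * pairing b w.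
Proof. rewrite /phi pairing_lin; lra. Qed.

Lemma mem_Amin q w : (w \in Amin nu f q) =
  all (fun w' => phi nu f q w <= phi nu f q w') (msupp f) && (w \in msupp f).
Proof. by rewrite mem_filter. Qed.

Lemma Amin_le q w w' : w \in Amin nu f q -> w' \in msupp f -> phi nu f q w <= phi nu f q w'.
Proof. by rewrite mem_Amin => /andP[/allP h _] /h. Qed.

Lemma Amin_supp q w : w \in Amin nu f q -> w \in msupp f.
Proof. by rewrite mem_Amin => /andP[]. Qed.

Lemma Amin_eq q w w' : w \in Amin nu f q -> w' \in Amin nu f q -> phi nu f q w = phi nu f q w'.
Proof.
move=> h1 h2; apply/le_anti/andP; split; apply: Amin_le => //; [exact: Amin_supp h2 | exact: Amin_supp h1].
Qed.

Lemma notAmin q w v : w \in msupp f -> w \notin Amin nu f q -> v \in Amin nu f q ->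
  phi nu f q v < phi nu f q w.
Proof.
move=> ws; rewrite mem_Amin ws andbT => /allPn [w'' w''s]; rewrite -ltNge => hlt hv.
exact: le_lt_trans (Amin_le hv w''s) hlt.
Qed.

Lemma phi_hull k (pts : 'I_k -> vec R N) lam q w : \sum_j lam j = 1 ->
  (forall i, q i = \sum_j lam j * pts j i) ->
  phi nu f q w = \sum_j lam j * phi nu f (pts j) w.
Proof.
move=> hl hq; rewrite /phi /pairing.
under [RHS]eq_bigr do rewrite mulrBr.
rewrite sumrB -mulr_suml hl mul1r; congr (_ - _).
under eq_bigr do rewrite hq mulr_suml.
rewrite exchange_big /=; apply: eq_bigr => j _; rewrite mulr_sumr; apply: eq_bigr => i _.
by rewrite mulrA.
Qed.

End Geo.

Section Cell.
Variables (K : fieldType) (R : realFieldType) (N : nat) (nu : K -> R) (f : {mpoly K[N]}).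
Variables (p : vec R N) (v0 : 'X_{1..N}) (hv0 : v0 \in Amin nu f p).

Lemma Phat_L c : cell_hat nu f (Amin nu f p) c ->
  forall w, w \in Amin nu f p -> phi nu f c w = phi nu f c v0.
Proof. move=> hc w hw; apply: Amin_eq; [exact: hc | exact: hc]. Qed.

Lemma hull_L q : aff_hull (cell_hat nu f (Amin nu f p)) q ->
  forall w, w \in Amin nu f p -> phi nu f q w = phi nu f q v0.
Proof.
case=> [k [pts [lam [hpts [hl hq]]]]] w hw.
rewrite (phi_hull nu f w hl hq) (phi_hull nu f v0 hl hq); apply: eq_bigr => j _.
by rewrite (Phat_L (hpts j) hw).
Qed.

Definition inD (x : vec R N) := forall w, w \in Amin nu f p -> pairing x w = pairing x v0.

Lemma L_diff a b : (forall w, w \in Amin nu f p -> phi nu f a w = phi nu f a v0) ->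
  (forall w, w \in Amin nu f p -> phi nu f b w = phi nu f b v0) -> inD (fun i => a i - b i).
Proof. move=> ha hb w hw; rewrite !pairing_sub; have := ha w hw; have := hb w hw; rewrite /phi; lra. Qed.

Lemma dir_D x : aff_dir (cell_hat nu f (Amin nu f p)) x -> inD x.
Proof.
case=> [a [b [ha [hb hx]]]] w hw; rewrite (pairing_ext w hx) (pairing_ext v0 hx).
exact: (L_diff (hull_L ha) (hull_L hb) hw).
Qed.

Lemma small_t x : inD x -> exists t, 0 < t /\ cell_hat nu f (Amin nu f p) (fun i => p i + t * x i).
Proof.
move=> hx.
have H : forall w', w' \in msupp f -> 0 < phi nu f p w' - phi nu f p v0 \/
    (pairing x w' - pairing x v0 <= 0 /\ 0 <= phi nu f p w' - phi nu f p v0).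
  move=> w' hw'; case: (boolP (w' \in Amin nu f p)) => hA.
    by right; rewrite (hx _ hA) (Amin_eq hA hv0) !subrr.
  by left; rewrite subr_gt0; exact: notAmin hw' hA hv0.
have [t [t0 ht]] := exists_t H.
exists t; split => //.
move=> w hw; rewrite mem_Amin (Amin_supp hw) andbT; apply/allP => w' hw'.
rewrite !phi_lin (Amin_eq hw hv0) (hx _ hw); have := ht w' hw'; lra.
Qed.

Lemma hull_of_D c x q : cell_hat nu f (Amin nu f p) c -> inD x ->
  (forall i, q i = c i + x i) -> aff_hull (cell_hat nu f (Amin nu f p)) q.
Proof.
move=> hc hx hq; have [t [t0 ht]] := small_t hx.
exists 3, (fun j : 'I_3 => if val j == 0%N then c else if val j == 1%N then (fun i => p i + t * x i) else p),
  (fun j : 'I_3 => if val j == 0%N then 1 else if val j == 1%N then t^-1 else - t^-1).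
split.
  move=> j; case: ifP => _; first exact: hc; case: ifP => _; first exact: ht; by move=> w.
split; first by rewrite !big_ord_recl big_ord0 /=; lra.
move=> i; rewrite hq !big_ord_recl big_ord0 /=; field; exact: lt0r_neq0.
Qed.

End Cell.

Lemma int_1 (x y : int) : x * y = 1 -> 0 <= y -> y = 1.
Proof. move=> /intUnitRing.unitzPl. rewrite qualifE /= => /orP[/eqP->|/eqP->] //. Qed.

Lemma pairing_int (R : realFieldType) N (z : 'I_N -> int) (w : 'X_{1..N}) :
  pairing (intvec R z) w = (\sum_i z i * (w i)%:Z)%:~R.
Proof. rewrite /pairing rmorph_sum; apply: eq_bigr => i _; rewrite /intvec rmorphM /=. done. Qed.

Lemma pairing_one (R : realFieldType) N (w : 'X_{1..N}) :
  pairing (fun _ => 1 : R) w = (mdeg w)%:R.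
Proof. rewrite /pairing mdegE natr_sum; apply: eq_bigr => i _; by rewrite mul1r. Qed.

Lemma hull_self (R : realFieldType) N (S : vec R N -> Prop) c : S c -> aff_hull S c.
Proof.
move=> hc; exists 1%N, (fun _ => c), (fun _ => 1); split => //; split; first by rewrite big_ord1.
by move=> i; rewrite big_ord1 mul1r.
Qed.

Theorem lemma5p3 (K : closedFieldType) (R : realFieldType) (n : nat)
  (nu : K -> R) (f : {mpoly K[n.+1]})
  (charK0 : [pchar K] =i pred0)
  (hnu : is_nonarch_valuation nu)
  (hnu_nontriv : valuation_nontrivial nu)
  (hnu_int : valuation_trivial_on_integers nu)
  (hhom : mhomogeneous f)
  (hall : involves_all_variables f)
  (hirr : mirreducible f)
  (hcone : ~ hypersurface_is_cone f)
  (hsmooth : trop_smooth nu f)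
  (p : 'I_n.+1 -> R) (hp : in_trop_hat nu f p)
  (u : 'X_{1..n.+1}) (hu : u \in msupp f) (huA0 : u \notin Amin nu f p)
  (hsimp : exists q0 : 'I_n.+1 -> R, Amin nu f q0 =i u :: Amin nu f p) :
  let A0 := Amin nu f p in
  let Phat := cell_hat nu f A0 in
  let Qhat := facet_hat nu f A0 u in
  (exists y, primitive_inward_normal Phat Qhat y) /\
  forall (v : 'X_{1..n.+1}) (q : 'I_n.+1 -> R),
    v \in A0 -> aff_hull Phat q ->
    forall (y q' : 'I_n.+1 -> R),
      primitive_inward_normal Phat Qhat y -> Qhat q' ->
      dot y (fun i => q i - q' i) = phi nu f q u - phi nu f q v.
Proof.
cbv zeta.
have [v0 hv0] : exists v0, v0 \in Amin nu f p.
  move: hp; rewrite /in_trop_hat; case: (Amin nu f p) => [|v0 s] //= _; exists v0; exact: mem_head.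
have [q0 hq0] := hsimp.
have hA0q0 : forall w, w \in Amin nu f p -> w \in Amin nu f q0 by move=> w hw; rewrite hq0 inE hw orbT.
have uq0 : u \in Amin nu f q0 by rewrite hq0 mem_head.
have q0P : cell_hat nu f (Amin nu f p) q0 := hA0q0.
have pP : cell_hat nu f (Amin nu f p) p by move=> w.
have [z [zD zu]] : exists z : 'I_n.+1 -> int, inD nu f p v0 (intvec R z) /\
    pairing (intvec R z) u - pairing (intvec R z) v0 = -1.
  move: (hsmooth q0); case E: (Amin nu f q0) => [|w0 rest]; first by rewrite E in uq0.
  move=> hfam.
  pose h (w : 'X_{1..n.+1}) : int := if w == u then -1 else 0.
  have [z hz] := unimod_solve hfam (fun j => h (nth w0 rest j) - h w0).
  have key : forall w, w \in Amin nu f q0 ->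
      \sum_i z i * (w i)%:Z - \sum_i z i * (w0 i)%:Z = h w - h w0.
    move=> w; rewrite E inE => /orP[/eqP->|hw]; first by rewrite !subrr.
    have hj : (index w rest < size [seq diff_exps w0 w | w <- rest])%N by rewrite size_map index_mem.
    have := hz (Ordinal hj); rewrite /= (nth_map w0) ?index_mem // nth_index // => <-.
    rewrite -sumrB; apply: eq_bigr => i _; rewrite /diff_exps; ring.
  have hA : forall w, w \in Amin nu f p -> h w = 0.
    by move=> w hw; rewrite /h; case: eqP => // wu; move: huA0; rewrite -wu hw.
  exists z; split.
    move=> w hw; rewrite !pairing_int; congr intmul.
    have e1 := key w (hA0q0 w hw); have e2 := key v0 (hA0q0 v0 hv0).
    rewrite (hA w hw) in e1; rewrite (hA v0 hv0) in e2.
    move: e1 e2; set Sw := \sum_i _; set S0 := \sum_i _; set Sv := \sum_i _ => e1 e2.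
    have -> : Sw = (Sw - Sv) + Sv by rewrite subrK.
    have -> : Sw - Sv = (Sw - S0) - (Sv - S0) by ring.
    by rewrite e1 e2 subrr add0r.
  rewrite !pairing_int -intrB.
  have e1 := key u uq0; have e2 := key v0 (hA0q0 v0 hv0).
  have hu1 : h u = -1 by rewrite /h eqxx.
  rewrite (hA v0 hv0) in e2; rewrite hu1 in e1.
  move: e1 e2; set Sw := \sum_i _; set S0 := \sum_i _; set Sv := \sum_i _ => e1 e2.
  have -> : Sw - Sv = (Sw - S0) - (Sv - S0) by ring.
  rewrite e1 e2; have -> : (-1 - h w0) - (0 - h w0) = -1 by ring.
  by rewrite rmorphN1.
pose ell (x : vec R n.+1) := pairing x v0 - pairing x u.
have ell_g : forall a b, ell (fun i => a i - b i) =
    (phi nu f a u - phi nu f a v0) - (phi nu f b u - phi nu f b v0).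
  by move=> a b; rewrite /ell !pairing_sub /phi; ring.
have ell_lin : forall a b t, ell (fun i => a i + t * b i) = ell a + t * ell b.
  by move=> a b t; rewrite /ell !pairing_lin; ring.
have ell_z : ell (intvec R z) = 1 by rewrite /ell; lra.
have dirz : aff_dir (cell_hat nu f (Amin nu f p)) (intvec R z).
  exists (fun i => p i + intvec R z i), p; split; first exact: (hull_of_D hv0 pP zD).
  split; [exact: hull_self | by move=> i; ring].
have Qq0 : facet_hat nu f (Amin nu f p) u q0.
  split; first exact: hull_self.
  by move=> v hv; apply: Amin_eq uq0 (hA0q0 v hv).
split.
  exists (fun i => (v0 i)%:R - (u i)%:R).
  have doty : forall x, dot (fun i => (v0 i)%:R - (u i)%:R) x = ell x.
    by move=> x; rewrite /dot /ell /pairing -sumrB; apply: eq_bigr => i _; ring.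
  split; [|split; [|split; [|split]]].
  - rewrite doty /ell; have [d hd] := hhom.
    by rewrite !pairing_one (hd _ hu) (hd _ (Amin_supp hv0)) subrr.
  - move=> z' _; rewrite doty /ell !pairing_int -intrB; by eexists.
  - by exists z; split => //; rewrite doty.
  - by move=> a b [_ ha] [_ hb]; rewrite doty ell_g (ha v0 hv0) (hb v0 hv0) !subrr.
  - move=> a b ha [_ hb]; rewrite doty ell_g (hb v0 hv0) subrr subr0 subr_ge0.
    exact: Amin_le (ha v0 hv0) hu.
move=> v q hv hq y q' [y1 [y2 [[z1 [hz1 y3]] [y4 y5]]]] hq'.
pose c := dot y (intvec R z).
have prop : forall x, inD nu f p v0 x -> dot y x = ell x * c.
  move=> x hx.
  pose x' := fun i => x i + (- ell x) * intvec R z i.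
  have hx' : inD nu f p v0 x' by move=> w hw; rewrite /x' !pairing_lin (hx w hw) (zD w hw).
  have ellx' : ell x' = 0 by rewrite /x' ell_lin ell_z mulr1 addrN.
  have Qa : facet_hat nu f (Amin nu f p) u (fun i => q0 i + 1 * x' i).
    split; first by apply: (hull_of_D hv0 q0P hx') => i; rewrite mul1r.
    move=> w hw; rewrite !phi_lin (Amin_eq uq0 (hA0q0 w hw)); congr (_ - _ * _).
    by rewrite (hx' w hw); move: ellx'; rewrite /ell; lra.
  have e : dot y (fun i => (q0 i + 1 * x' i) - q0 i) = dot y x + (- ell x) * c.
    by rewrite -dot_lin; apply: dot_ext => i; rewrite /x'; ring.
  move: (y4 _ _ Qa Qq0); rewrite e => /eqP; rewrite mulNr subr_eq0 => /eqP.
  done.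
have c_ge0 : 0 <= c.
  have := y5 _ _ pP Qq0; rewrite prop; last exact: L_diff (Phat_L hv0 pP) (Phat_L hv0 q0P).
  rewrite ell_g (Amin_eq uq0 (hA0q0 v0 hv0)) subrr subr0.
  have gp := notAmin hu huA0 hv0.
  by rewrite pmulr_rge0 // subr_gt0.
have [k hk] := y2 _ dirz.
have c1 : c = 1.
  have := y3; rewrite prop; last by move=> w hw; exact: (dir_D hv0 hz1 hw).
  rewrite /ell !pairing_int -intrB /c hk -intrM => hm.
  have hm' : ((\sum_i z1 i * (v0 i)%:Z - \sum_i z1 i * (u i)%:Z) * k) = 1.
    by apply: (intr_inj (R:=R)); rewrite hm.
  have k0 : 0 <= k by rewrite -(ler0z R) -hk.
  by rewrite (int_1 hm' k0).
rewrite prop; last exact: L_diff (hull_L hv0 hq) (hull_L hv0 hq'.1).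
by rewrite c1 mulr1 ell_g (hq'.2 v0 hv0) subrr subr0 (hull_L hv0 hq hv).
Qed.
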